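(* Let $s\ge1$ and for $1\le i\le s$ let $K_i$ be a simplicial complex that is nice on $[n_i]$, with $d_i=\dim K_i$. Put $d=\sum_{i=1}^s d_i+s-1=\dim(K_1*\cdots*K_s)$ and suppose $\sum_{i=1}^s n_i-s-2=2d$. Then for every $i$, $n_i=2d_i+3$ and $K_i$ consists of all subsets of $[n_i]$ of cardinality at most $d_i+1$, i.e. $K_i=(\Delta_{2d_i+2})^{\le d_i}$. Consequently $\mathcal{F}_d=\{(K_1*\cdots*K_s)^d : s\ge1,\ d_i\ge0,\ K_i=(\Delta_{2d_i+2})^{\le d_i},\ \sum_{i=1}^s d_i=d-s+1\}$.
   Context: A simplicial complex is a nonempty family of subsets of a finite vertex set closed under subsets; $\dim F=|F|-1$. A complex $K$ with vertex set identified with a subset of $[n]$ is nice on $[n]$ if for every $F\subseteq[n]$ exactly one of $F$, $[n]\setminus F$ lies in $K$. The join $K_1*K_2$ has vertex set $V(K_1)\sqcup V(K_2)$ and simplices $F_1\sqcup F_2$ with $F_i\in K_i$ (iterated for several factors). $\Delta_m$ is the complex of all subsets of an $(m+1)$-element set and $K^{\le k}$ is the subcomplex of simplices of dimension at most $k$. For a $d$-dimensional complex $K$, $(K)^d$ denotes the $(d+1)$-graph on $V(K)$ whose edges are the $d$-simplices of $K$. $\mathcal{F}_d$ is the family of $(d+1)$-graphs $(K_1*\cdots*K_s)^d$ where $s\ge1$, each $K_i$ is nice on $[n_i]$, $\dim(K_1*\cdots*K_s)=d$, and $n_1+\cdots+n_s=2d+s+2$. *)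

(* Defs.v *)
From HB Require Import structures.
From mathcomp Require Import all_boot all_order all_algebra.
Set Implicit Arguments. Unset Strict Implicit. Unset Printing Implicit Defensive.
Import Order.TTheory GRing.Theory Num.Theory.

Definition is_complex (n : nat) (K : {set {set 'I_n}}) : bool :=
  (K != set0) &&
  [forall F in K, forall G : {set 'I_n}, (G \subset F) ==> (G \in K)].

Definition nice (n : nat) (K : {set {set 'I_n}}) : bool :=
  [forall F : {set 'I_n}, (F \in K) (+) ((~: F) \in K)].

Definition cdim (n : nat) (K : {set {set 'I_n}}) : int :=
  ((\max_(F in K) #|F|)%:Z - 1)%R.

(* (Δ_{n-1})^{≤ k}: all subsets of [n] of dimension at most k,
   i.e. of cardinality at most k+1. *)
Definition skel (n : nat) (k : int) : {set {set 'I_n}} :=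
  [set F : {set 'I_n} | (#|F|%:Z <= k + 1)%R].

(* Main.v *)
Require Import Defs.
From HB Require Import structures.
From mathcomp Require Import all_boot all_order all_algebra.
From mathcomp Require Import zify.
Import Order.TTheory GRing.Theory Num.Theory.
Set Implicit Arguments.

Lemma exists_card (n k : nat) : (k <= n)%N -> exists F : {set 'I_n}, #|F| = k.
Proof.
move=> h; exists [set widen_ord h j | j : 'I_k].
rewrite card_imset ?card_ord //.
by move=> a b /(congr1 val) /= /val_inj.
Qed.

Lemma cardC_n n (F : {set 'I_n}) : #|~: F| = (n - #|F|)%N.
Proof. have := cardsC F; rewrite card_ord; lia. Qed.

Lemma card_le n (F : {set 'I_n}) : (#|F| <= n)%N.
Proof. by have := max_card F; rewrite card_ord. Qed.

Definition mx n (K : {set {set 'I_n}}) := (\max_(F in K) #|F|)%N.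

Lemma mx_le n (K : {set {set 'I_n}}) F : F \in K -> (#|F| <= mx K)%N.
Proof. by move=> h; exact: (@leq_bigmax_cond _ (fun G => G \in K) (fun G => #|G|) F h). Qed.

Lemma nice_bound n (K : {set {set 'I_n}}) : nice K -> (n <= 2 * mx K + 1)%N.
Proof.
move=> /forallP hn.
case: (leqP n (mx K)) => h; first lia.
have [F hF] := @exists_card n (mx K).+1 h.
have nF : F \notin K by apply/negP => /mx_le; lia.
have := hn F; rewrite (negbTE nF) /= => /mx_le.
rewrite cardC_n; lia.
Qed.

Lemma nice_skel n (K : {set {set 'I_n}}) : nice K -> n = (2 * mx K + 1)%N ->
  K = [set F : {set 'I_n} | (#|F| <= mx K)%N].
Proof.
move=> /forallP hn hN; apply/setP => F; rewrite inE.
apply/idP/idP; first exact: mx_le.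
move=> hF; have := hn F.
have -> : (~: F \in K) = false.
  apply/negP => /mx_le; rewrite cardC_n; have := max_card F; rewrite card_ord; lia.
by rewrite addbF.
Qed.

Local Open Scope ring_scope.

Lemma sumZ s (m : 'I_s -> nat) : \sum_(i < s) ((m i)%:Z - 1) = (\sum_(i<s) m i)%N%:Z - s%:Z.
Proof.
rewrite big_split /= sumrN sumr_const card_ord; congr (_ - _); last by rewrite natz.
by rewrite -natz natr_sum; apply: eq_bigr => i _; rewrite natz.
Qed.

Lemma cdimE n (K : {set {set 'I_n}}) : cdim K = (mx K)%:Z - 1.
Proof. by []. Qed.

Lemma inskel n e (F : {set 'I_n}) : (F \in skel n e%:Z) = (#|F| <= e + 1)%N.
Proof. rewrite inE; apply/idP/idP; lia. Qed.

Theorem lemma3p8 :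
  (forall (s : nat) (n : 'I_s -> nat) (K : forall i : 'I_s, {set {set 'I_(n i)}})
     (d : int),
     (0 < s)%N ->
     (forall i, is_complex (K i) /\ nice (K i)) ->
     d = \sum_(i < s) cdim (K i) + s%:Z - 1 ->
     (\sum_(i < s) n i)%N%:Z - s%:Z - 2 = 2 * d ->
     forall i : 'I_s,
       (n i)%:Z = 2 * cdim (K i) + 3 /\ K i = skel (n i) (cdim (K i)))
  /\
  (forall e : nat,
     is_complex (skel (2 * e + 3)%N e%:Z) /\ nice (skel (2 * e + 3)%N e%:Z) /\
     cdim (skel (2 * e + 3)%N e%:Z) = e%:Z).
Proof.
split.
  move=> s n K d s0 hK hd hs i.
  have hb j : (n j <= 2 * mx (K j) + 1)%N by apply: nice_bound; case: (hK j).
  have hc : \sum_(j < s) cdim (K j) = (\sum_(j<s) mx (K j))%N%:Z - s%:Z by rewrite -sumZ.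
  rewrite hc in hd.
  have hsum : (\sum_(j < s) n j = 2 * \sum_(j < s) mx (K j) + s)%N by lia.
  have hs2 : (\sum_(j < s) (2 * mx (K j) + 1) = 2 * \sum_(j < s) mx (K j) + s)%N.
    by rewrite big_split /= -big_distrr /= sum_nat_const card_ord muln1.
  have hni : n i = (2 * mx (K i) + 1)%N.
    apply/eqP; rewrite eqn_leq hb /=; rewrite leqNgt; apply/negP => hlt.
    have : (\sum_(j < s) n j < \sum_(j < s) (2 * mx (K j) + 1))%N.
      rewrite (bigD1 i) //= [X in (_ < X)%N](bigD1 i) //=.
      rewrite -addSn; apply: leq_add; first exact: hlt.
      by apply: leq_sum => j _; apply: hb.
    lia.
  split; first by have := hni; rewrite cdimE; lia.
  rewrite {1}(@nice_skel _ _ (proj2 (hK i)) hni).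
  apply/setP => F; rewrite !inE cdimE subrK; apply/idP/idP; lia.
move=> e; split; last split.
- apply/andP; split.
    by apply/set0Pn; exists set0; rewrite inskel cards0.
  apply/forallP=> F; apply/implyP => hF; apply/forallP => G; apply/implyP => sub.
  rewrite inskel; have := subset_leq_card sub; rewrite inskel in hF; lia.
- apply/forallP => F; rewrite !inskel cardC_n; have := card_le F; set c := #|F|.
  by move=> hc; case: (leqP c (e + 1)) => h /=; [rewrite -ltnNge|]; lia.
- rewrite cdimE.
  have -> : mx (skel (2 * e + 3) e%:Z) = (e + 1)%N; last by lia.
  apply/eqP; rewrite eqn_leq; apply/andP; split.
    by apply/bigmax_leqP => F; rewrite inskel.
  have [F hF] := @exists_card (2 * e + 3) (e + 1) ltac:(lia).
  by rewrite -hF; apply: mx_le; rewrite inskel hF.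
Qed.
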